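(* Let $m \in \mathbb N$ and $X, Y, Z \in M_m$. Then $\cos\varphi\, X + \sin\varphi\, Y + Z \in \mathcal U_m$ for all $\varphi \in \mathbb R$ if and only if $$|X|^2 = |Y|^2 = I_m - |Z|^2 \quad\text{and}\quad \operatorname{Re}(X^\ast Y) = \operatorname{Re}(X^\ast Z) = \operatorname{Re}(Y^\ast Z) = 0_m.$$
   Context: $M_m$ is the set of $m\times m$ complex matrices and $\mathcal U_m$ the unitary ones. For $A \in M_m$, $\operatorname{Re}A = \tfrac12(A + A^\ast)$ and $|A| = (A^\ast A)^{1/2}$, so $|A|^2 = A^\ast A$. *)

(* Defs.v *)
From mathcomp Require Import all_boot all_order all_algebra.
From mathcomp Require Import complex.
From mathcomp Require Import all_classical all_reals.
From mathcomp Require Import trigo.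
Set Implicit Arguments. Unset Strict Implicit. Unset Printing Implicit Defensive.
Import Order.TTheory GRing.Theory Num.Theory.
Local Open Scope ring_scope.
Local Open Scope complex_scope.

Definition adj (R : rcfType) (m n : nat) (A : 'M[R[i]]_(m, n)) : 'M[R[i]]_(n, m) :=
  (map_mx (fun z => z^*) A)^T.

Definition mxRe (R : rcfType) (m : nat) (A : 'M[R[i]]_m) : 'M[R[i]]_m :=
  (2%:R)^-1 *: (A + adj A).

Definition absSq (R : rcfType) (m : nat) (A : 'M[R[i]]_m) : 'M[R[i]]_m :=
  adj A *m A.

Definition unitary (R : rcfType) (m : nat) (U : 'M[R[i]]_m) : Prop :=
  adj U *m U = 1%:M /\ U *m adj U = 1%:M.

(* Main.v *)
Require Import Defs.
From mathcomp Require Import all_boot all_order all_algebra.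
From mathcomp Require Import complex.
From mathcomp Require Import all_classical all_reals.
From mathcomp Require Import trigo.
From mathcomp Require Import ring.
Import Order.TTheory GRing.Theory Num.Theory.
Local Open Scope ring_scope.
Local Open Scope complex_scope.

Section S.
Variable R : rcfType.
Lemma adjD m n (A B : 'M[R[i]]_(m,n)) : adj (A + B) = adj A + adj B.
Proof. by apply/matrixP=> i j; rewrite !mxE rmorphD. Qed.
Lemma adjZ m n k (A : 'M[R[i]]_(m,n)) : adj (k *: A) = conjc k *: adj A.
Proof. by apply/matrixP=> i j; rewrite !mxE rmorphM. Qed.
Lemma adjK m n (A : 'M[R[i]]_(m,n)) : adj (adj A) = A.
Proof. by apply/matrixP=> i j; rewrite !mxE conjcK. Qed.
Lemma adjM m n p (A : 'M[R[i]]_(m,n)) (B : 'M[R[i]]_(n,p)) : adj (A *m B) = adj B *m adj A.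
Proof. apply/matrixP=> i j; rewrite !mxE rmorph_sum; apply: eq_bigr => k _.
by rewrite !mxE rmorphM mulrC. Qed.

Definition PP m (A B : 'M[R[i]]_m) := adj A *m B + adj B *m A.
Arguments PP {m}.

Lemma expand m (X Y Z : 'M[R[i]]_m) (k1 k2 : R[i]) : k1^* = k1 -> k2^* = k2 ->
  absSq (k1 *: X + k2 *: Y + Z) = (k1*k1) *: absSq X + (k2*k2) *: absSq Y
   + absSq Z + (k1*k2) *: PP X Y + k1 *: PP X Z + k2 *: PP Y Z.
Proof.
move=> h1 h2; rewrite /absSq /PP !adjD !adjZ. rewrite h1 h2 !mulmxDl !mulmxDr.
rewrite -!scalemxAl -!scalemxAr !scalerA.
set a1 := adj X *m X; set a2 := adj X *m Y; set a3 := adj X *m Z.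
set a4 := adj Y *m X; set a5 := adj Y *m Y; set a6 := adj Y *m Z.
set a7 := adj Z *m X; set a8 := adj Z *m Y; set a9 := adj Z *m Z.
clearbody a1 a2 a3 a4 a5 a6 a7 a8 a9.
apply/matrixP=> i j; rewrite !mxE. ring.
Qed.

Lemma mxReE m (X Y : 'M[R[i]]_m) : mxRe (adj X *m Y) = 2^-1 *: PP X Y.
Proof. by rewrite /mxRe /PP adjM adjK. Qed.

Lemma two_neq0 : (2 : R[i]) != 0.
Proof. by rewrite pnatr_eq0. Qed.

End S.
Arguments PP {R m}.

Lemma solve (F : fieldType) (c s a b d p q r u : F) :
 (2:F) != 0 -> c*s*2 = 1 -> c*c + s*s = 1 ->
 a + d + q = u -> a + d - q = u -> b + d + r = u -> b + d - r = u ->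
 c*c*a + s*s*b + d + c*s * p + c*q + s*r = u ->
 a = b /\ b = u - d /\ p = 0 /\ q = 0 /\ r = 0.
Proof.
move=> h2 hcs hcc e1 e2 e3 e4 e5.
have hq : q = 0.
  have : q * 2 = (a+d+q) - (a+d-q) by ring.
  by rewrite e1 e2 subrr => /eqP; rewrite mulf_eq0 (negPf h2) orbF => /eqP.
have hr : r = 0.
  have : r * 2 = (b+d+r) - (b+d-r) by ring.
  by rewrite e3 e4 subrr => /eqP; rewrite mulf_eq0 (negPf h2) orbF => /eqP.
have ha : a = u - d by rewrite -e1 hq; ring.
have hb : b = u - d by rewrite -e3 hr; ring.
have hp : c*s * p*2 = 0.
  have <- : (c*c*a + s*s*b + d + c*s * p + c*q + s*r - (c*c+s*s)*(u-d) - d)*2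
     = c*s * p*2 by rewrite ha hb hq hr; ring.
  by rewrite e5 hcc; ring.
split; first by rewrite ha hb.
split=> //; split=> //.
by rewrite -[p]mul1r -hcs -hp; ring.
Qed.

Theorem lemma3p1 (R : realType) (m : nat) (X Y Z : 'M[R[i]]_m) :
  (forall phi : R, unitary ((cos phi)%:C *: X + (sin phi)%:C *: Y + Z)) <->
  (absSq X = absSq Y /\ absSq Y = 1%:M - absSq Z /\
   mxRe (adj X *m Y) = 0 /\ mxRe (adj X *m Z) = 0 /\ mxRe (adj Y *m Z) = 0).
Proof.
rewrite !mxReE.
split.
- move=> H.
  have E phi i j : let k1 := (cos phi)%:C in let k2 := (sin phi)%:C in
     k1*k1 * absSq X i j + k2*k2 * absSq Y i j + absSq Z i j + k1*k2 * PP X Y i j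
     + k1 * PP X Z i j + k2 * PP Y Z i j = (1%:M : 'M[R[i]]_m) i j.
    move=> k1 k2; have := (H phi).1; rewrite -/(absSq _) expand ?conjc_real //.
    by move/matrixP/(_ i j); rewrite !mxE.
  have hpi4 : cos (pi / 4) * sin (pi / 4) * 2 = 1 :> R.
    rewrite -[RHS]sin_pihalf (_ : pi / 2 = pi / 4 + pi / 4); last by field.
    by rewrite sinD; ring.
  have hcs : (cos (pi/4))%:C * (sin (pi/4))%:C * 2 = 1 :> R[i].
    by rewrite -!rmorphM -(rmorph_nat (real_complex R) 2) -rmorphM hpi4 rmorph1.
  have hcc : (cos (pi/4))%:C * (cos (pi/4))%:C + (sin (pi/4))%:C * (sin (pi/4))%:C = 1 :> R[i].
    by rewrite -!rmorphM -rmorphD -!expr2 cos2Dsin2 rmorph1.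
  have e0 i j : absSq X i j + absSq Z i j + PP X Z i j = (1%:M : 'M[R[i]]_m) i j.
    by have := E 0 i j; rewrite /= cos0 sin0 rmorph0 rmorph1 !(mul0r, mulr0, mul1r, add0r, addr0).
  have e1 i j : absSq X i j + absSq Z i j - PP X Z i j = (1%:M : 'M[R[i]]_m) i j.
    by have := E pi i j; rewrite /= cospi sinpi rmorph0 rmorphN rmorph1 !(mul0r, mulr0, mul1r, mulN1r, mulrN1, add0r, addr0, opprK).
  have e2 i j : absSq Y i j + absSq Z i j + PP Y Z i j = (1%:M : 'M[R[i]]_m) i j.
    by have := E (pi/2) i j; rewrite /= cos_pihalf sin_pihalf rmorph0 rmorph1 !(mul0r, mulr0, mul1r, add0r, addr0).
  have e3 i j : absSq Y i j + absSq Z i j - PP Y Z i j = (1%:M : 'M[R[i]]_m) i j.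
    by have := E (- (pi/2)) i j; rewrite /= cosN sinN cos_pihalf sin_pihalf rmorph0 rmorphN rmorph1 !(mul0r, mulr0, mul1r, mulN1r, mulrN1, add0r, addr0, opprK).
  have hS (i j : 'I_m) := @solve _ _ _ _ _ _ _ _ _ _ (two_neq0 R) hcs hcc (e0 i j) (e1 i j) (e2 i j) (e3 i j) (E (pi/4) i j).
  split; first by apply/matrixP=> i j; case: (hS i j).
  split; first by apply/matrixP=> i j; case: (hS i j) => _ [+ _]; rewrite !mxE.
  split; first by apply/matrixP=> i j; case: (hS i j) => _ [_ [+ _]]; rewrite !mxE => ->; rewrite mulr0.
  split; first by apply/matrixP=> i j; case: (hS i j) => _ [_ [_ [+ _]]]; rewrite !mxE => ->; rewrite mulr0.
  by apply/matrixP=> i j; case: (hS i j) => _ [_ [_ [_ +]]]; rewrite !mxE => ->; rewrite mulr0.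
- move=> [hab [hb [hp [hq hr]]]] phi.
  have P0 (A : 'M[R[i]]_m) : 2^-1 *: A = 0 -> A = 0.
    by move=> h; rewrite -[A]scale1r -(mulfV (two_neq0 R)) -scalerA h scaler0.
  move/P0: hp => hp; move/P0: hq => hq; move/P0: hr => hr.
  suff h1 : adj ((cos phi)%:C *: X + (sin phi)%:C *: Y + Z) *m ((cos phi)%:C *: X + (sin phi)%:C *: Y + Z) = 1%:M.
    by split=> //; apply: mulmx1C.
  rewrite -/(absSq _) expand ?conjc_real // hp hq hr hab hb !scaler0 !addr0.
  have hc : (cos phi)%:C * (cos phi)%:C + (sin phi)%:C * (sin phi)%:C = 1 :> R[i].
    by rewrite -!rmorphM -rmorphD -!expr2 cos2Dsin2 rmorph1.
  rewrite -scalerDl hc scale1r; exact: subrK.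
Qed.
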